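(* For all positive integers $n,k$, $$N_B(n,k,k+1)\ \ge\ N_P(n,k,k+1)\ \ge\ \Bigl(k-1+\frac1k\Bigr)n.$$
   Context: Fix a finite field $\mathbb{F}_q$; $[n]=\{1,\dots,n\}$. An $(n,N,k,m)$-batch array code (BAC) over $\mathbb{F}_q$ is an $\mathbb{F}_q$-linear map $\mathcal{C}:\mathbf x=(x_1,\dots,x_n)\in\mathbb{F}_q^n\mapsto(\mathbf c_1,\dots,\mathbf c_m)$ with buckets $\mathbf c_\ell\in\mathbb{F}_q^{N_\ell}$, $N_\ell\ge1$ independent of $\mathbf x$, $\sum_\ell N_\ell=N$, such that for every multiset $\{\{i_1,\dots,i_k\}\}$ of elements of $[n]$ there is a partition of $[m]$ into $k$ sets $R_1,\dots,R_k$ such that for each $j\in[k]$, $x_{i_j}$ is an $\mathbb{F}_q$-linear combination of values $f_\ell(\mathbf c_\ell)$, $\ell\in R_j$, for some linear functionals $f_\ell:\mathbb{F}_q^{N_\ell}\to\mathbb{F}_q$ (independent of $\mathbf x$). An $(n,N,k,m)$-PIR array code is defined identically but the requirement is only imposed for multisets $\{\{i,\dots,i\}\}$. $N_P(n,k,m)$ (resp. $N_B(n,k,m)$) is the minimum $N$ for which an $(n,N,k,m)$-PIR array code (resp. BAC) over $\mathbb{F}_q$ exists. *)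

(* Defs.v *)
From HB Require Import structures.
From mathcomp Require Import all_boot all_order all_algebra all_field.
From mathcomp Require Import boolp.
Set Implicit Arguments. Unset Strict Implicit. Unset Printing Implicit Defensive.
Import GRing.Theory.
Local Open Scope ring_scope.

(* An array code with m buckets over F: bucket l has size sizes l (>= 1) and
   content c_l = x *m G l, for the information row vector x : 'rV[F]_n.
   A request is a k-tuple req : 'I_k -> 'I_n (a multiset of k indices).
   A partition of [m] into k nonempty blocks R_1..R_k is encoded by
   r : 'I_m -> 'I_k (R_j = r^-1(j)).  Recovery of x_{req j} from block R_j:
   there are linear functionals f_l : F^{sizes l} -> F (column vectors)
   and coefficients a_l with x_{req j} = sum_{l in R_j} a_l f_l(c_l). *)
Definition recoverable (F : fieldType) (n k m : nat) (sizes : 'I_m -> nat)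
    (G : forall l : 'I_m, 'M[F]_(n, sizes l)) (req : 'I_k -> 'I_n) : Prop :=
  exists r : 'I_m -> 'I_k,
    (forall j : 'I_k, exists l : 'I_m, r l = j) /\
    exists (f : forall l : 'I_m, 'cV[F]_(sizes l)) (a : 'I_m -> F),
      forall (j : 'I_k) (x : 'rV[F]_n),
        x 0 (req j) = \sum_(l < m | r l == j) a l * (x *m G l *m f l) 0 0.

Definition is_array_code (F : fieldType) (n N k m : nat)
    (reqs : ('I_k -> 'I_n) -> Prop) : Prop :=
  exists (sizes : 'I_m -> nat) (G : forall l : 'I_m, 'M[F]_(n, sizes l)),
    (forall l, (0 < sizes l)%N) /\ (\sum_(l < m) sizes l)%N = N /\
    forall req, reqs req -> recoverable G req.

Definition is_BAC (F : fieldType) (n N k m : nat) : Prop :=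
  @is_array_code F n N k m (fun _ => True).

Definition is_PIR (F : fieldType) (n N k m : nat) : Prop :=
  @is_array_code F n N k m (fun req => exists i : 'I_n, forall j, req j = i).

(* minimum N satisfying P (0 if no such N exists) *)
Definition min_nat (P : nat -> Prop) : nat :=
  match pselect (exists N, P N) with
  | left h =>
      @ex_minn (fun N => `[< P N >])
        (let: ex_intro N hN := h in ex_intro _ N (asboolT hN))
  | right _ => 0%N
  end.

Definition N_P (F : fieldType) (n k m : nat) : nat := min_nat (fun N => is_PIR F n N k m).
Definition N_B (F : fieldType) (n k m : nat) : nat := min_nat (fun N => is_BAC F n N k m).

(* Main.v *)
Require Import Defs.
From HB Require Import structures.
From mathcomp Require Import all_boot all_order all_algebra all_field.
From mathcomp Require Import boolp zify ring lra.
Set Implicit Arguments. Unset Strict Implicit. Unset Printing Implicit Defensive.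
Import Order.TTheory GRing.Theory Num.Theory.
Local Open Scope ring_scope.

Lemma rank_units (F : fieldType) p n (V : 'M[F]_(p, n)) :
  (\sum_(i < n) (delta_mx (ord0 : 'I_1) i <= V)%MS <= \rank V)%N.
Proof.
set S := [set i : 'I_n | (delta_mx (ord0 : 'I_1) i <= V)%MS].
have -> : (\sum_(i < n) (delta_mx (ord0 : 'I_1) i <= V)%MS = #|S|)%N.
  rewrite -sum1_card [RHS]big_mkcond /=; apply: eq_bigr => i _.
  by rewrite inE; case: (delta_mx _ _ <= _)%MS.
pose ev := @enum_val _ (mem S).
pose M : 'M[F]_(#|S|, n) := \matrix_(j, t) ((ev j == t)%:R).
have rowM j : row j M = delta_mx (ord0 : 'I_1) (ev j).
  by apply/rowP => t; rewrite !mxE eq_sym /=.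
have sMV : (M <= V)%MS.
  apply/row_subP => j; rewrite rowM.
  by have := enum_valP j; rewrite inE.
have MM : M *m M^T = 1%:M.
  apply/matrixP => j j'; rewrite !mxE (bigD1 (ev j)) //= big1 ?addr0.
    rewrite !mxE eqxx mul1r (inj_eq (@enum_val_inj _ (mem S))) eq_sym.
    by case: (j == j').
  by move=> t /negbTE ht; rewrite !mxE eq_sym ht mul0r.
apply: leq_trans (mxrankS sMV).
by rewrite -{1}(mxrank1 F #|S|) -MM mxrankM_maxl.
Qed.

Lemma pair_rank (F : fieldType) p1 p2 n (A : 'M[F]_(p1, n)) (B : 'M[F]_(p2, n)) :
  (\sum_(i < n) ((delta_mx (ord0 : 'I_1) i <= A)%MS + (delta_mx (ord0 : 'I_1) i <= B)%MS +
     [&& (delta_mx (ord0 : 'I_1) i <= A + B)%MS, ~~ (delta_mx (ord0 : 'I_1) i <= A)%MS & ~~ (delta_mx (ord0 : 'I_1) i <= B)%MS])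
   <= \rank A + \rank B)%N.
Proof.
rewrite -mxrank_sum_cap.
apply: leq_trans (leq_add (rank_units (A + B)%MS) (rank_units (A :&: B)%MS)).
rewrite -big_split /=; apply: leq_sum => i _.
rewrite sub_capmx.
have hA : (delta_mx (ord0 : 'I_1) i <= A)%MS -> (delta_mx (ord0 : 'I_1) i <= A + B)%MS.
  by move=> h; apply: submx_trans h (addsmxSl _ _).
have hB : (delta_mx (ord0 : 'I_1) i <= B)%MS -> (delta_mx (ord0 : 'I_1) i <= A + B)%MS.
  by move=> h; apply: submx_trans h (addsmxSr _ _).
move: hA hB.
by case: (delta_mx (ord0 : 'I_1) i <= A)%MS; case: (delta_mx (ord0 : 'I_1) i <= B)%MS;
   case: (delta_mx (ord0 : 'I_1) i <= A + B)%MS => //= hA hB;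
   by [move: (hA isT) | move: (hB isT)].
Qed.

Lemma sym_sum k (x : 'I_k.+1 -> nat) :
  (\sum_a \sum_(b | b != a) (x a + x b) = 2 * k * \sum_a x a)%N.
Proof.
have E : (\sum_a \sum_b (x a + x b) = \sum_a (x a + x a + \sum_(b | b != a) (x a + x b)))%N.
  by apply: eq_bigr => a _; rewrite (bigD1 a).
have E2 : (\sum_a \sum_b (x a + x b) = 2 * k.+1 * \sum_a x a)%N.
  under eq_bigr => a _ do rewrite big_split /= big_const_ord iter_addn_0.
  rewrite big_split /= big_const_ord iter_addn_0 -big_distrl /=.
  lia.
move: E; rewrite E2 big_split /= big_split /=. lia.
Qed.

Lemma per_req (F : fieldType) n k (sizes : 'I_k.+1 -> nat)
  (H : forall l, 'M[F]_(sizes l, n)) (i : 'I_n) (r : 'I_k.+1 -> 'I_k)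
  (surj : forall j, exists l, r l = j)
  (rep : forall j, exists c : forall l, 'rV[F]_(sizes l),
      delta_mx (ord0 : 'I_1) i = \sum_(l < k.+1 | r l == j) c l *m H l) :
  (2 * k * (k - 1) + 2 <= 2 * k * \sum_l (delta_mx (ord0 : 'I_1) i <= H l)%MS
     + \sum_a \sum_(b | b != a) [&& (delta_mx (ord0 : 'I_1) i <= H a + H b)%MS,
          ~~ (delta_mx (ord0 : 'I_1) i <= H a)%MS & ~~ (delta_mx (ord0 : 'I_1) i <= H b)%MS])%N.
Proof.
set e := delta_mx (ord0 : 'I_1) i.
have [a [b [nab rab]]] : exists a b, a != b /\ r a = r b.
  apply: contrapT => hn.
  have rinj : injective r.
    move=> x y hxy; apply/eqP; apply: contrapT => /negP hxy'.
    by apply: hn; exists x, y.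
  by have := @leq_card _ _ r rinj; rewrite !card_ord ltnn.
have k0 : (0 < k)%N by have := ltn_ord (r a); lia.
have inj : forall l l', l != a -> l' != a -> r l = r l' -> l = l'.
  move=> l l' hl hl'.
  have : {in [set~ a] &, injective r}.
    apply/imset_injP.
    have -> : r @: [set~ a] = [set: 'I_k].
      apply/setP => j; rewrite inE; have [l0 <-] := surj j.
      case: (eqVneq l0 a) => [->|h].
        by rewrite rab; apply: imset_f; rewrite !inE eq_sym.
      by apply: imset_f; rewrite !inE.
    by rewrite cardsC1 cardsT !card_ord.
  by move/(_ l l'); rewrite !inE; apply.
have single : forall l, l != a -> l != b -> (e <= H l)%MS.
  move=> l hla hlb; have [c E] := rep (r l).
  rewrite /e E (big_pred1 l) ?submxMl // => l'.
  rewrite /= -[RHS]/(l' == l).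
  case: (eqVneq l' l) => [->|hl']; first by rewrite eqxx.
  apply/negbTE/eqP => hr.
  case: (eqVneq l' a) => [hl'a|hl'a].
    move: hr; rewrite hl'a rab => /esym /(inj _ _ hla).
    by rewrite eq_sym nab => /(_ isT) /eqP; rewrite (negbTE hlb).
  by move/eqP: hl'; apply; apply: inj.
have pair : (e <= H a + H b)%MS /\ (e <= H b + H a)%MS.
  have [c E] := rep (r a).
  have E' : e = c a *m H a + c b *m H b.
    rewrite /e E (bigD1 a) //= (bigD1 b) /=; last by rewrite rab eqxx /= eq_sym.
    rewrite big1 ?addr0 // => l /andP [/andP [/eqP hr hla] hlb].
    by case/eqP: hlb; apply: inj => //; [rewrite eq_sym | rewrite hr rab].
  rewrite /e in E' *; split; rewrite E'; last rewrite addrC; exact: addmx_sub_adds (submxMl _ _) (submxMl _ _).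
have hc : (\sum_l (e <= H l)%MS = (e <= H a)%MS + (e <= H b)%MS + (k - 1))%N.
  have h1 : (\sum_(l < k.+1) 1 = k.+1)%N by rewrite big_const_ord iter_addn_0 mul1n.
  rewrite (bigD1 a) // (bigD1 b) /=; last by rewrite eq_sym nab.
  rewrite (bigD1 a) // (bigD1 b) /= in h1; last by rewrite eq_sym nab.
  rewrite (eq_bigr (fun _ => 1%N)); first by lia.
  by move=> l /andP [hla hlb]; rewrite single.
case ta : (e <= H a)%MS; case tb : (e <= H b)%MS; rewrite hc /=.
- by nia.
- by nia.
- by nia.
have hQ : (2 <= \sum_x \sum_(y | y != x) [&& (e <= H x + H y)%MS, ~~ (e <= H x)%MS & ~~ (e <= H y)%MS])%N.
  rewrite (bigD1 a) // (bigD1 b) /=; last by rewrite eq_sym nab.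
  set Sa := (\sum_(y | y != a) _)%N; set Sb := (\sum_(y | y != b) _)%N.
  have q1 : (1 <= Sa)%N.
    rewrite /Sa (bigD1 b) /=; last by rewrite eq_sym nab.
    by rewrite ta tb (proj1 pair) /=; lia.
  have q2 : (1 <= Sb)%N.
    rewrite /Sb (bigD1 a) /=; last by rewrite nab.
    by rewrite ta tb (proj2 pair) /=; lia.
  lia.
by move: hQ; rewrite ta tb /=; nia.
Qed.

Lemma PIR_bound (F : fieldType) n k N : (0 < k)%N -> is_PIR F n N k k.+1 ->
  (n * (k * (k - 1) + 1) <= k * N)%N.
Proof.
move=> k0 [sizes [G [hpos [hsum hrec]]]].
pose H l : 'M[F]_(sizes l, n) := (G l)^T.
have hreq : forall i : 'I_n, (2 * k * (k - 1) + 2 <= 2 * k * \sum_l (delta_mx (ord0 : 'I_1) i <= H l)%MS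
     + \sum_a \sum_(b | b != a) [&& (delta_mx (ord0 : 'I_1) i <= H a + H b)%MS,
          ~~ (delta_mx (ord0 : 'I_1) i <= H a)%MS & ~~ (delta_mx (ord0 : 'I_1) i <= H b)%MS])%N.
  move=> i.
  have [r [surj [f [a eqn]]]] := hrec (fun _ => i) (ex_intro _ i (fun _ => erefl)).
  apply: (per_req surj) => j.
  exists (fun l => a l *: (f l)^T).
  apply/rowP => t; rewrite summxE.
  have := eqn j (delta_mx 0 t).
  rewrite !mxE eq_sym /= => ->.
  apply: eq_bigr => l _.
  rewrite -scalemxAl /H -trmx_mul !mxE; congr (_ * _); apply: eq_bigr => j0 _.
  by rewrite -rowE mxE.
have S1 : (\sum_l \rank (H l) <= N)%N.
  by rewrite -hsum; apply: leq_sum => l _; exact: rank_leq_row.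
have S2 : (\sum_(i < n) (2 * k * (k - 1) + 2) <=
           \sum_a \sum_(b | b != a) (\rank (H a) + \rank (H b)))%N.
  apply: leq_trans (_ : (\sum_(i < n) \sum_a \sum_(b | b != a)
     ((delta_mx (ord0 : 'I_1) i <= H a)%MS + (delta_mx (ord0 : 'I_1) i <= H b)%MS +
     [&& (delta_mx (ord0 : 'I_1) i <= H a + H b)%MS,
          ~~ (delta_mx (ord0 : 'I_1) i <= H a)%MS & ~~ (delta_mx (ord0 : 'I_1) i <= H b)%MS]) <= _)%N).
    apply: leq_sum => i _.
    under eq_bigr do rewrite big_split /=.
    by rewrite big_split /= sym_sum; exact: hreq.
  rewrite exchange_big; apply: leq_sum => a _.
  rewrite exchange_big; apply: leq_sum => b _.
  exact: pair_rank.
move: S2; rewrite sym_sum big_const_ord iter_addn_0 => S2.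
have S3 := leq_mul2l (2 * k) (\sum_l \rank (H l)) N.
rewrite S1 orbT in S3.
nia.
Qed.

Lemma min_natP (P : nat -> Prop) : (exists N, P N) ->
  P (min_nat P) /\ forall N, P N -> (min_nat P <= N)%N.
Proof.
move=> h; rewrite /min_nat; case: pselect => [h'|//].
case: ex_minnP => m /asboolP hm hmin; split => // N /asboolP; exact: hmin.
Qed.

Lemma BAC_exists (F : fieldType) n k : (0 < n)%N -> exists N, is_BAC F n N k.+1 k.+2.
Proof.
move=> n0; exists (k.+2 * n)%N.
exists (fun _ => n), (fun _ => 1%:M); split => //; split.
  by rewrite big_const_ord iter_addn_0 mulnC.
move=> req _.
exists (fun l : 'I_k.+2 => inord l : 'I_k.+1); split.
  by move=> j; exists (widen_ord (leqnSn _) j); apply: val_inj; rewrite /= inordK.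
exists (fun l => delta_mx (req (inord l)) 0), (fun l : 'I_k.+2 => ((l : nat) < k.+1)%N%:R).
move=> j x.
have hw : (inord (widen_ord (leqnSn k.+1) j) : 'I_k.+1) = j.
  by apply: val_inj; rewrite /= inordK.
rewrite (bigD1 (widen_ord (leqnSn _) j)) /=; last by rewrite hw.
rewrite big1 ?addr0.
  by rewrite hw ltn_ord mul1r mulmx1 -colE mxE.
move=> l /andP [/eqP hr hl].
case: (ltnP l k.+1) => hlk; last by rewrite mul0r.
move: hl; rewrite -hr; case/eqP; apply: val_inj; rewrite /= inordK //.
Qed.

Theorem corollary3p3 (F : finFieldType) (n k : nat) :
  (0 < n)%N -> (0 < k)%N ->
  (N_P F n k k.+1 <= N_B F n k k.+1)%N /\
  ((k%:R - 1 + k%:R^-1) * n%:R <= (N_P F n k k.+1)%:R :> rat).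
Proof.
move=> n0; case: k => [//|k] _.
have hB := BAC_exists F k n0.
have BP : forall N, is_BAC F n N k.+1 k.+2 -> is_PIR F n N k.+1 k.+2.
  by move=> N [s [G [h1 [h2 h3]]]]; exists s, G; split => //; split => // req _; apply: h3.
have hP : exists N, is_PIR F n N k.+1 k.+2 by case: hB => N /BP; exists N.
have [hB1 hB2] := min_natP hB.
have [hP1 hP2] := min_natP hP.
split; first exact: hP2 (BP _ hB1).
have h := PIR_bound (ltn0Sn k) hP1.
rewrite -/(N_P F n k.+1 k.+2) subSS subn0 in h.
set NP := N_P F n k.+1 k.+2 in h *.
have kpos : (0 : rat) < k.+1%:R by rewrite ltr0n.
rewrite -(ler_pM2l kpos).
have E : k.+1%:R * ((k.+1%:R - 1 + k.+1%:R^-1) * n%:R) = n%:R * (k.+1%:R * k%:R + 1) :> rat.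
  rewrite -natr1; field; rewrite natr1 pnatr_eq0 //.
rewrite E.
move: h; rewrite -(ler_nat rat) !natrM natrD natrM => h.
exact: h.
Qed.
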